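(* Let $X$, $\mathcal{L}$, $\mathbb{H}$, $v$, $h$, $R$, $\tilde v$ and $S=S(R)$ be as below, with $S$ finitely generated and generating $\mathbb{Z}^{n+1}$, and let $\tilde\lambda:\mathbb{Z}^{n+1}\to M$ be the homomorphism described below. Let $R'=R^{\mathbb{H}}$ be the subalgebra of $\mathbb{H}$-invariants and $S(R')=\tilde v(R'\setminus\{0\})$. Then $S(R')=S\cap\ker\tilde\lambda_\mathbb{R}$, where $\tilde\lambda_\mathbb{R}$ is the $\mathbb{R}$-linear extension of $\tilde\lambda$. In particular $S(R')$ is finitely generated.
   Context: $\mathbb{H}$ is an algebraic torus with character lattice $M$, acting on a projective variety $X$ of dimension $n$ with an $\mathbb{H}$-linearized very ample line bundle $\mathcal{L}$; $L=H^0(X,\mathcal{L})$, $L^k$ the image of $L^{\otimes k}$ in $H^0(X,\mathcal{L}^{\otimes k})$, $R=\bigoplus_k L^k$. $v:\mathbb{C}(X)\setminus\{0\}\to\mathbb{Z}^n$ is an $\mathbb{H}$-invariant valuation with one-dimensional leaves, $0\ne h\in L$ is an $\mathbb{H}$-weight vector, $\tilde v(f)=(k,v(f/h^k))$ for $f\in R_k\setminus\{0\}$, $S=\{\tilde v(f)\}$. It is known that for each $(k,a)\in S$ there is an $\mathbb{H}$-weight vector $f\in R_k$ with $\tilde v(f)=(k,a)$, that its weight depends only on $(k,a)$, and that the resulting map $S\to M$ is a semigroup homomorphism; $\tilde\lambda:\mathbb{Z}^{n+1}\to M$ is its unique extension to a group homomorphism. *)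

(* Defs.v *)
From HB Require Import structures.
From mathcomp Require Import all_boot all_order all_algebra.
From mathcomp Require Import reals complex.
Set Implicit Arguments. Unset Strict Implicit. Unset Printing Implicit Defensive.
Import Order.TTheory GRing.Theory Num.Theory.
Local Open Scope ring_scope.

(* Abstract algebraic model of the setting:
   C = ℂ = Rr[i];  A = an ambient commutative C-algebra containing
   R = ⊕_k R_k (Rk k = the degree-k piece L^k);
   H = (C^×)^r  (points t : 'rV[C]_r with nonzero entries),  M = Z^r;
   act t : the (linearised) action of t ∈ H on sections;
   vt f  = v(f / h^k) ∈ Z^n for f ∈ R_k \ {0};  vtil k f = (k, vt f) ∈ Z^{1+n};
   vle   = the total group order on Z^n with respect to which v is a valuation;
   lam   = the homomorphism λ̃ : Z^{1+n} -> M, as an integer matrix acting on rows. *)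

Section Setting.
Variable Rr : realType.
Local Notation C := (Rr[i]).
Variables (n r : nat) (A : comAlgType C) (Rk : nat -> {pred A})
  (act : 'rV[C]_r -> A -> A) (h : A) (vt : A -> 'rV[int]_n)
  (vle : rel 'rV[int]_n) (lam : 'M[int]_(1 + n, r)).

Definition in_torus (t : 'rV[C]_r) : Prop := forall i, t 0 i != 0.

Definition character (m : 'rV[int]_r) (t : 'rV[C]_r) : C :=
  \prod_(i < r) (t 0 i) ^ (m 0 i).

Definition torus_mul (t s : 'rV[C]_r) : 'rV[C]_r := \row_i (t 0 i * s 0 i).

Definition weight_vector (k : nat) (m : 'rV[int]_r) (f : A) : Prop :=
  [/\ f \in Rk k, f != 0 &
      forall t, in_torus t -> act t f = character m t *: f].

Definition invariant (f : A) : Prop := forall t, in_torus t -> act t f = f.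

Definition vtil (k : nat) (f : A) : 'rV[int]_(1 + n) :=
  row_mx (const_mx (Posz k) : 'rV[int]_1) (vt f).

Definition S_R (s : 'rV[int]_(1 + n)) : Prop :=
  exists k f, [/\ f \in Rk k, f != 0 & s = vtil k f].

(* S(R') with R' = R^H; R' is graded with R'_k = (R_k)^H *)
Definition S_Rinv (s : 'rV[int]_(1 + n)) : Prop :=
  exists k f, [/\ f \in Rk k, f != 0, invariant f & s = vtil k f].

Definition lam_R (x : 'rV[Rr]_(1 + n)) : 'rV[Rr]_r := x *m map_mx intr lam.

Definition strictly_above (a b : 'rV[int]_n) := vle a b && (a != b).

Definition setting_axioms : Prop :=
  [/\
   [/\ forall a, vle a a,
       forall a b c, vle a b -> vle b c -> vle a c,
       forall a b, vle a b -> vle b a -> a = b,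
       forall a b, vle a b || vle b a &
       forall a b c, vle a b -> vle (a + c) (b + c)],
   [/\ forall k, 0 \in Rk k /\
         (forall (c : C) x y, x \in Rk k -> y \in Rk k -> c *: x + y \in Rk k),
       forall k l x y, x \in Rk k -> y \in Rk l -> x * y \in Rk (k + l),
       forall x, x \in Rk 0 <-> exists c : C, x = c%:A,
       forall x y : A, x * y = 0 -> x = 0 \/ y = 0 &
       [/\ forall x : A, exists N (xs : nat -> A),
             (forall i, xs i \in Rk i) /\ x = \sum_(i < N) xs i,
           forall N (xs : nat -> A), (forall i, xs i \in Rk i) ->
             \sum_(i < N) xs i = 0 -> forall i, (i < N)%N -> xs i = 0,
           forall k x, x \in Rk k.+1 -> exists l : seq (A * A),
             (forall p, p \in l -> p.1 \in Rk 1 /\ p.2 \in Rk k) /\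
             x = \sum_(p <- l) p.1 * p.2 &
           exists b : seq A, forall x, x \in Rk 1 ->
             exists c : nat -> C, x = \sum_(i < size b) c i *: b`_i]],
   (* H acts rationally by graded C-algebra automorphisms *)
   [/\ forall t, in_torus t -> forall (c : C) x y,
         act t (c *: x + y) = c *: act t x + act t y,
       forall t, in_torus t -> forall x y, act t (x * y) = act t x * act t y
                                           /\ act t 1 = 1,
       forall t k x, in_torus t -> x \in Rk k -> act t x \in Rk k,
       (forall x, act (const_mx 1) x = x) /\
       (forall t s x, in_torus t -> in_torus s ->
                      act (torus_mul t s) x = act t (act s x)) &
       forall k x, x \in Rk k -> exists l : seq ('rV[int]_r * A),
         (forall p, p \in l -> p.2 \in Rk k /\
            forall t, in_torus t -> act t p.2 = character p.1 t *: p.2) /\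
         x = \sum_(p <- l) p.2],
   (* h ∈ L is a nonzero weight vector, and v(h/h) = 0;
      v is an H-invariant valuation with one-dimensional leaves, trivial on C *)
   ((exists m, weight_vector 1 m h) /\ vt h = 0) /\
   [/\ forall k l f g, f \in Rk k -> g \in Rk l -> f != 0 -> g != 0 ->
         vt (f * g) = vt f + vt g,
       forall k (c : C) f, f \in Rk k -> f != 0 -> c != 0 -> vt (c *: f) = vt f,
       forall k f g, f \in Rk k -> g \in Rk k -> f != 0 -> g != 0 ->
         f + g != 0 -> vle (vt f) (vt (f + g)) || vle (vt g) (vt (f + g)),
       forall t k f, in_torus t -> f \in Rk k -> f != 0 -> vt (act t f) = vt f &
       forall k f g, f \in Rk k -> g \in Rk k -> f != 0 -> g != 0 ->
         vt f = vt g -> exists c : C,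
           f = c *: g \/ (f - c *: g != 0 /\ strictly_above (vt f) (vt (f - c *: g)))] &
   (* known: every (k,a) ∈ S is the value of a weight vector in R_k *)
   (forall k f, f \in Rk k -> f != 0 ->
     exists m g, weight_vector k m g /\ vtil k g = vtil k f) /\
   (* λ̃ : Z^{1+n} -> M extends the map S -> M, (k,a) ↦ weight *)
   (forall k m f, weight_vector k m f -> vtil k f *m lam = m)].

End Setting.

Definition fin_gen_monoid (d : nat) (P : 'rV[int]_d -> Prop) : Prop :=
  exists gens : seq 'rV[int]_d,
    (forall g, g \in gens -> P g) /\
    forall s, P s <-> exists c : nat -> nat, s = \sum_(i < size gens) gens`_i *+ c i.

Definition generates_group (d : nat) (P : 'rV[int]_d -> Prop) : Prop :=
  forall z : 'rV[int]_d, exists l : seq ('rV[int]_d * int),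
    (forall p, p \in l -> P p.1) /\ z = \sum_(p <- l) p.1 *~ p.2.

(* Main.v *)
Require Import Defs.
From HB Require Import structures.
From mathcomp Require Import all_boot all_order all_algebra.
From mathcomp Require Import reals complex.
From Stdlib Require Import Classical.
Import Order.TTheory GRing.Theory Num.Theory.
Definition z0 : nat -> nat := fun _ => 0%N.
Definition leg (g : nat) (q p : nat -> nat) := forall i, (i < g)%N -> (q i <= p i)%N.

Definition basis_of (g : nat) (P : (nat -> nat) -> Prop) (F : seq (nat -> nat)) :=
  (forall j, (j < size F)%N -> P (nth z0 F j)) /\
  (forall p, P p -> exists2 j, (j < size F)%N & leg g (nth z0 F j) p).

Lemma basis_cat (P : (nat -> nat) -> Prop) F G : (forall j, (j < size F)%N -> P (nth z0 F j)) ->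
  (forall j, (j < size G)%N -> P (nth z0 G j)) ->
  forall j, (j < size (F ++ G))%N -> P (nth z0 (F ++ G) j).
Proof.
move=> HF HG j; rewrite size_cat nth_cat; case: (ltnP j (size F)) => Hj Hs; first exact: HF.
apply: HG; rewrite -(ltn_add2l (size F)) subnKC //.
Qed.

Lemma dickson g : forall P, exists F, basis_of g P F.
Proof.
elim: g => [|g IH] P.
  case: (classic (exists p, P p)) => [[p Hp]|Hn].
    exists [:: p]; split; first by case.
    by move=> q _; exists 0%N.
  exists [::]; split; first by [].
  by move=> p Hp; case: Hn; exists p.
have [F0 [HF0a HF0b]] := IH P.
pose M := (\max_(j < size F0) nth z0 F0 j g)%N.
have HG : forall m, exists G,
  (forall j, (j < size G)%N -> P (nth z0 G j)) /\
  (forall p, P p -> (p g < m)%N -> exists2 j, (j < size G)%N & leg g.+1 (nth z0 G j) p).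
  elim=> [|m [G [HGa HGb]]].
    by exists [::]; split.
  have [F1 [HF1a HF1b]] := IH (fun p => P p /\ p g = m).
  exists (G ++ F1); split.
    apply: basis_cat => // j Hj; exact: (HF1a j Hj).1.
  move=> p Hp; rewrite ltnS leq_eqVlt; case/orP => [/eqP Hpm|Hlt].
    have [j Hj Hle] := HF1b p (conj Hp Hpm).
    exists (size G + j)%N; first by rewrite size_cat ltn_add2l.
    rewrite nth_cat ltnNge leq_addr /= addKn => i; rewrite ltnS leq_eqVlt.
    case/orP => [/eqP ->|Hi]; last exact: Hle.
    by have [_ ->] := HF1a j Hj; rewrite Hpm.
  have [j Hj Hle] := HGb p Hp Hlt.
  exists j; first by rewrite size_cat ltn_addr.
  by rewrite nth_cat Hj.
have [G [HGa HGb]] := HG M.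
exists (F0 ++ G); split; first exact: basis_cat.
move=> p Hp; have [j Hj Hle] := HF0b p Hp.
case: (leqP (nth z0 F0 j g) (p g)) => Hg.
  exists j; first by rewrite size_cat ltn_addr.
  rewrite nth_cat Hj => i; rewrite ltnS leq_eqVlt; case/orP => [/eqP ->//|]; exact: Hle.
have HpM : (p g < M)%N.
  apply: (leq_trans Hg).
  exact: (@leq_bigmax_cond _ _ (fun j0 : 'I_(size F0) => nth z0 F0 j0 g) (Ordinal Hj)).
have [k Hk Hle2] := HGb p Hp HpM.
exists (size F0 + k)%N; first by rewrite size_cat ltn_add2l.
by rewrite nth_cat ltnNge leq_addr /= addKn.
Qed.

Local Open Scope ring_scope.
Section G.
Variables (d r : nat) (gens : seq 'rV[int]_d) (lam : 'M[int]_(d, r)).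
Definition phi (c : nat -> nat) : 'rV[int]_d := \sum_(i < size gens) gens`_i *+ c i.

Lemma mulmxMn (x : 'rV[int]_d) k : (x *+ k) *m lam = (x *m lam) *+ k.
Proof. by elim: k => [|k IH]; rewrite ?mulr0n ?mul0mx // !mulrS mulmxDl IH. Qed.

Lemma phi_gen : exists F : seq (nat -> nat),
  (forall j, (j < size F)%N -> phi (nth z0 F j) *m lam = 0) /\
  forall c, phi c *m lam = 0 ->
    exists e : nat -> nat, phi c = \sum_(j < size F) phi (nth z0 F j) *+ e j.
Proof.
pose g := size gens.
pose P (c : nat -> nat) := phi c *m lam = 0 /\ (0 < \sum_(i < g) c i)%N.
have [F [HFa HFb]] := dickson g P.
exists F; split; first by move=> j /HFa [].
suff H : forall N (c : nat -> nat), (\sum_(i < g) c i <= N)%N -> phi c *m lam = 0 ->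
    exists e : nat -> nat, phi c = \sum_(j < size F) phi (nth z0 F j) *+ e j.
  by move=> c; apply: (H _ c (leqnn _)).
elim=> [|N IH] c Hc Hk.
  exists (fun _ => 0%N); rewrite [RHS]big1; last by move=> k _; rewrite mulr0n.
  rewrite /phi big1 // => i _.
  suff -> : c i = 0%N by rewrite mulr0n.
  apply/eqP; rewrite -leqn0; apply: leq_trans Hc.
  by rewrite (bigD1 i) //= leq_addr.
case: (posnP (\sum_(i < g) c i)) => Hpos.
  by apply: IH => //; rewrite Hpos.
have [j Hj Hle] := HFb c (conj Hk Hpos).
set q := nth z0 F j in Hle.
have [Hq Hqpos] := HFa j Hj.
pose c' := fun i => (c i - q i)%N.
have Hphi : phi c = phi c' + phi q.
  rewrite /phi -big_split /=; apply: eq_bigr => i _.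
  by rewrite -mulrnDr /c' subnK // Hle.
have Hk' : phi c' *m lam = 0.
  by move: Hk; rewrite Hphi mulmxDl Hq addr0.
have Hsum : (\sum_(i < g) c i = \sum_(i < g) c' i + \sum_(i < g) q i)%N.
  rewrite -big_split /=; apply: eq_bigr => i _; by rewrite /c' subnK // Hle.
have Hc' : (\sum_(i < g) c' i <= N)%N.
  rewrite Hsum in Hc; rewrite -ltnS; apply: leq_trans Hc.
  by rewrite -addn1 leq_add2l.
have [e He] := IH c' Hc' Hk'.
exists (fun k => e k + (k == j))%N.
rewrite Hphi He.
have -> : \sum_(k < size F) phi (nth z0 F k) *+ (e k + (k == j :> nat))%N =
  \sum_(k < size F) phi (nth z0 F k) *+ e k + \sum_(k < size F) phi (nth z0 F k) *+ (k == j :> nat).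
  by rewrite -big_split; apply: eq_bigr => k _; rewrite mulrnDr.
congr (_ + _).
rewrite (bigD1 (Ordinal Hj)) //= eqxx mulr1n big1 ?addr0 // => k Hkj.
suff -> : (k == j :> nat) = false by rewrite mulr0n.
by apply/negbTE; apply: contra Hkj => /eqP Hkj; apply/eqP; apply: val_inj.
Qed.
End G.

Theorem mainTheorem16 (Rr : realType) (n r : nat) (A : comAlgType Rr[i])
  (Rk : nat -> {pred A}) (act : 'rV[Rr[i]]_r -> A -> A) (h : A)
  (vt : A -> 'rV[int]_n) (vle : rel 'rV[int]_n) (lam : 'M[int]_(1 + n, r)) :
  setting_axioms Rk act h vt vle lam ->
  fin_gen_monoid (S_R Rk vt) ->
  generates_group (S_R Rk vt) ->
  (forall s, S_Rinv Rk act vt s <->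
     (S_R Rk vt s /\ lam_R (Rr:=Rr) lam (map_mx intr s) = 0)) /\
  fin_gen_monoid (S_Rinv Rk act vt).
Proof.
move=> Hax [gens [Hg Hgen]] _.
case: Hax => _ _ _ _ [Hex Hlam].
have char0 : forall t : 'rV[Rr[i]]_r, character 0 t = 1.
  by move=> t; rewrite /character big1 // => i _; rewrite mxE expr0z.
have Hlr : forall s : 'rV[int]_(1 + n),
    lam_R (Rr:=Rr) lam (map_mx intr s) = 0 <-> s *m lam = 0.
  move=> s; rewrite /lam_R -map_mxM; split=> [H|->]; last first.
    by apply/matrixP => i j; rewrite !mxE.
  apply/matrixP => i j; move/matrixP: H => /(_ i j); rewrite !mxE.
  by move/eqP; rewrite intr_eq0 => /eqP.
have P1 : forall s, S_Rinv Rk act vt s <-> S_R Rk vt s /\ s *m lam = 0.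
  move=> s; split.
    case=> k [f [Hf Hf0 Hinv ->]]; split; first by exists k, f.
    apply: Hlam; split=> // t Ht; by rewrite char0 scale1r Hinv.
  case=> [[k [f [Hf Hf0 ->]]] H0].
  have [m [g [[Hg1 Hg2 Hg3] Hgv]]] := Hex k f Hf Hf0.
  have Hm : m = 0 by rewrite -(Hlam k m g) ?Hgv //.
  exists k, g; split=> //.
  by move=> t Ht; rewrite Hg3 // Hm char0 scale1r.
have Hmain : forall s, S_Rinv Rk act vt s <->
     (S_R Rk vt s /\ lam_R (Rr:=Rr) lam (map_mx intr s) = 0).
  by move=> s; rewrite P1; split=> [[H1 H2]|[H1 H2]]; split=> //; apply/Hlr.
split=> //.
have [F [HFa HFb]] := @phi_gen _ _ gens lam.
exists (map (@phi _ gens) F); split.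
  move=> x Hx.
  have [j Hj ->] : exists2 j, (j < size F)%N & x = @phi _ gens (nth z0 F j).
    exists (index x (map (@phi _ gens) F)); first by rewrite -(size_map (@phi _ gens)) index_mem.
    by rewrite -(nth_map z0 0) ?nth_index // -(size_map (@phi _ gens)) index_mem.
  apply/P1; split; last exact: HFa.
  by apply/Hgen; exists (nth z0 F j).
move=> s; split.
  move/P1 => [/Hgen [c Hc] H0].
  have Hs : s = @phi _ gens c := Hc.
  have H0c : @phi _ gens c *m lam = 0 by rewrite -Hs.
  have [e He] := HFb c H0c.
  exists e; rewrite Hs He size_map; apply: eq_bigr => j _.
  by rewrite (nth_map z0).
case=> e ->; apply/P1; split.
  apply/Hgen; exists (fun i => \sum_(j < size F) nth z0 F j i * e j)%N.
  rewrite size_map.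
  transitivity (\sum_(j < size F) @phi _ gens (nth z0 F j) *+ e j).
    by apply: eq_bigr => j _; rewrite (nth_map z0).
  rewrite /phi; under [RHS]eq_bigr do rewrite -sumrMnr.
  rewrite exchange_big /=; apply: eq_bigr => j _.
  by rewrite -sumrMnl; apply: eq_bigr => i _; rewrite mulrnA.
rewrite mulmx_suml big1 // => j _.
have Hj : (j < size F)%N by rewrite -(size_map (@phi _ gens)).
by rewrite (nth_map z0) // mulmxMn HFa // mul0rn.
Qed.
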